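(* Let $p_1, p_2, \ldots, p_m$ ($m \geq 1$) be distinct primes and $n = p_1 p_2 \cdots p_m$. Then the non-nilradical graph $\Omega(\mathbb{Z}_n)$ is very cost effective.
   Context: $\mathbb{Z}_n$ is the ring of residue classes modulo $n$. The non-nilradical graph $\Omega(\mathbb{Z}_n)$ has as vertices the non-nilpotent zero-divisors of $\mathbb{Z}_n$, two distinct vertices being adjacent iff their product is $0$. For a graph $G=(V,E)$ and $S\subseteq V$, a vertex $v\in S$ is very cost effective if $|N(v)\cap S| < |N(v)\cap (V\setminus S)|$; $S$ is very cost effective if every vertex of $S$ is. A bipartition $\{S, V\setminus S\}$ is very cost effective if both parts are very cost effective, and $G$ is very cost effective if it has a very cost effective bipartition. *)

(* Defs.v *)
From mathcomp Require Import all_boot.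
Set Implicit Arguments. Unset Strict Implicit. Unset Printing Implicit Defensive.

(* Z_n is modelled on 'I_n (residues 0..n-1) with multiplication mod n. *)

Definition zero_divisor_Zn (n : nat) (x : 'I_n) : Prop :=
  exists y : 'I_n, (y : nat) <> 0 /\ (x * y) %% n = 0.

Definition nilpotent_Zn (n : nat) (x : 'I_n) : Prop :=
  exists k : nat, (x ^ k) %% n = 0.

Definition omega_vertex (n : nat) (x : 'I_n) : Prop :=
  zero_divisor_Zn x /\ ~ nilpotent_Zn x.

(* adjacency (between distinct residues with product 0); only used between
   vertices *)
Definition omega_adj (n : nat) (x y : 'I_n) : bool :=
  (x != y) && ((x * y) %% n == 0).

Definition nbhd (n : nat) (v : 'I_n) : {set 'I_n} := [set u | omega_adj u v].

Definition very_cost_effective_part (n : nat) (S T : {set 'I_n}) : Prop :=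
  forall v, v \in S -> #|nbhd v :&: S| < #|nbhd v :&: T|.

Definition omega_bipartition (n : nat) (S T : {set 'I_n}) : Prop :=
  [disjoint S & T] /\ (forall x : 'I_n, omega_vertex x <-> x \in S :|: T).

Definition omega_very_cost_effective (n : nat) : Prop :=
  exists S T : {set 'I_n}, omega_bipartition S T /\
    very_cost_effective_part S T /\ very_cost_effective_part T S.

(* Main.v *)
Require Import Defs.
From mathcomp Require Import all_boot.

Lemma zd_notcop n (x y : 'I_n) : (y : nat) != 0 -> n %| x * y -> ~~ coprime x n.
Proof.
move=> y0 d; apply/negP => cop.
move: d; rewrite Gauss_dvdr; last by rewrite coprime_sym.
move=> d; have := dvdn_leq _ d; rewrite lt0n y0 => /(_ isT).
by rewrite leqNgt ltn_ord.
Qed.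

Lemma dvd_notcop n p x : prime p -> p %| n -> p %| x -> ~~ coprime x n.
Proof.
move=> pp pn px; apply/negP => cop.
have : coprime p n by apply: coprime_dvdl cop.
by rewrite prime_coprime // pn.
Qed.

Lemma vertexP n (x : 'I_n) : 1 < n ->
  (forall (z : 'I_n) k, n %| z ^ k -> (z:nat) = 0) ->
  omega_vertex x <-> ((x:nat) != 0) && ~~ coprime x n.
Proof.
move=> n1 nil; split.
  move=> [[y [y0 hy]] nn].
  have x0 : (x : nat) != 0.
    apply/negP => /eqP x0; apply: nn; exists 1; by rewrite expn1 x0 mod0n.
  rewrite x0 /=; apply: (@zd_notcop _ _ y); first by apply/eqP.
  by rewrite /dvdn hy.
move=> /andP [x0 ncx]; split; last first.
  move=> [k hk]; move/eqP: x0; apply; apply: (nil x k).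
  by rewrite /dvdn hk.
set g := gcdn x n.
have n0 : 0 < n by apply: ltn_trans n1.
have g0 : 0 < g by rewrite gcdn_gt0 n0 orbT.
have g1 : 1 < g by move: ncx g0; rewrite /coprime -/g; case: g => [|[|]].
have yn : n %/ g < n by apply: ltn_Pdiv.
exists (Ordinal yn); split => /=.
  apply/eqP; rewrite -lt0n divn_gt0 //; apply: dvdn_leq => //; exact: dvdn_gcdr.
apply/eqP; rewrite -/(dvdn n _) muln_divCA ?dvdn_gcdl ?dvdn_gcdr //.
exact: dvdn_mulr.
Qed.

Lemma nbhdE n (u v : 'I_n) : omega_adj u v = (u != v) && (n %| u * v).
Proof. by []. Qed.

Lemma main_abs n p q : prime p -> n = p * q -> ~~ (p %| q) ->
  (forall (z : 'I_n) k, n %| z ^ k -> (z:nat) = 0) -> omega_very_cost_effective n.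
Proof.
move=> pp nE npq nil.
have p1 := prime_gt1 pp.
have q0 : 0 < q by case: q npq nE => [|q']; rewrite ?dvdn0.
have n1 : 1 < n by rewrite nE; apply: (leq_trans p1); rewrite leq_pmulr.
have n0 : 0 < n by apply: ltn_trans n1.
have pn : p %| n by rewrite nE dvdn_mulr.
have qn : q < n by rewrite nE ltn_Pmull.
set S := [set x : 'I_n | ((x:nat) != 0) && (p %| x)].
set T := [set x : 'I_n | [&& ((x:nat) != 0), ~~ (p %| x) & ~~ coprime x n]].
exists S, T; split; [split|split].
- rewrite -setI_eq0; apply/eqP/setP => x; rewrite !inE.
  by case: (p %| x); rewrite ?andbF.
- move=> x; apply: (iff_trans (@vertexP n x n1 nil)); rewrite !inE.
  case: (boolP (p %| x)) => px; rewrite ?andbF ?andbT ?orbF /=; last by split.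
  by rewrite (@dvd_notcop n p x pp pn px) andbT.
- move=> x; rewrite inE => /andP [x0 px].
  pose f (y : 'I_n) : 'I_n := Ordinal (ltn_pmod (y + q) n0).
  pose q' : 'I_n := Ordinal qn.
  have finj : injective f.
    move=> a b /(congr1 val) /= /eqP.
    rewrite eqn_modDr (modn_small (ltn_ord a)) (modn_small (ltn_ord b)).
    by move/eqP/val_inj.
  have nqx : n %| q * x.
    by rewrite -(divnK px) mulnA mulnC mulnA -nE dvdn_mulr.
  have q'in : q' \in nbhd x :&: T.
    rewrite !inE nbhdE /= nqx npq -lt0n q0 /= andbT.
    rewrite (@zd_notcop _ q' x) // andbT.
    by apply: contraNneq npq => e; rewrite -[q]/(nat_of_ord q') e.
  have sub : f @: (nbhd x :&: S) \subset (nbhd x :&: T) :\ q'.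
    apply/subsetP => _ /imsetP [y yin ->].
    move: yin; rewrite !inE !nbhdE => /andP [/andP [yx nyx] /andP [y0 py]].
    have npf : ~~ (p %| f y).
      rewrite /= -(dvdn_addr _ (dvdn_mull ((y + q) %/ n) pn)) -divn_eq.
      by rewrite dvdn_addr.
    have nfx : n %| f y * x.
      rewrite /dvdn /= modnMml mulnDl -/(dvdn _ _); exact: dvdn_add.
    have f0 : (f y : nat) != 0 by apply: contra npf => /eqP ->.
    rewrite npf nfx f0 /= (@zd_notcop _ (f y) x) // !andbT.
    apply/andP; split.
      apply/negP => /eqP/(congr1 val) /= /eqP.
      rewrite -{2}(modn_small qn) -{2}[q]add0n eqn_modDr mod0n.
      by rewrite (modn_small (ltn_ord y)); apply/negP.
    by apply: contraNneq npf => ->.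
  rewrite -(card_imset _ finj); apply: (leq_ltn_trans (subset_leq_card sub)).
  by rewrite [X in _ < X](cardsD1 q') q'in add1n ltnSn.
- move=> x; rewrite inE => /and3P [x0 npx ncx].
  rewrite (_ : nbhd x :&: T = set0) ?cards0; last first.
    apply/setP => z; rewrite !inE nbhdE; apply/negP.
    move=> /andP [/andP [_ hz] /and3P [_ pz _]].
    have : p %| z * x by apply: dvdn_trans hz.
    by rewrite Euclid_dvdM // (negbTE pz) (negbTE npx).
  set g := gcdn x n.
  have g0 : 0 < g by rewrite gcdn_gt0 n0 orbT.
  have g1 : 1 < g by move: ncx g0; rewrite /coprime -/g; case: g => [|[|]].
  have yn : n %/ g < n by apply: ltn_Pdiv.
  apply/card_gt0P; exists (Ordinal yn).
  have py : p %| n %/ g.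
    have : p %| n %/ g * g by rewrite divnK ?dvdn_gcdr.
    rewrite Euclid_dvdM // => /orP [] // pg.
    by move: npx; rewrite (dvdn_trans pg (dvdn_gcdl _ _)).
  rewrite !inE nbhdE /= py andbT.
  apply/andP; split; last first.
    by rewrite -lt0n divn_gt0 // dvdn_leq // dvdn_gcdr.
  apply/andP; split.
    by apply: contraNneq npx => <-.
  by rewrite mulnC muln_divCA ?dvdn_gcdl ?dvdn_gcdr // dvdn_mulr.
Qed.

Lemma notdvd_prod p ps : prime p -> all prime ps -> p \notin ps ->
  ~~ (p %| \prod_(r <- ps) r).
Proof.
move=> pp; elim: ps => [|r ps IH] /=.
  by rewrite big_nil dvdn1 => _ _; apply: contraTneq pp => ->.
move=> /andP [pr aps]; rewrite inE negb_or => /andP [npr nps].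
by rewrite big_cons Euclid_dvdM // dvdn_prime2 // (negbTE npr) IH.
Qed.

Lemma prod_dvd ps x : uniq ps -> all prime ps -> (forall r, r \in ps -> r %| x) ->
  \prod_(r <- ps) r %| x.
Proof.
elim: ps => [|r ps IH] /=; first by rewrite big_nil dvd1n.
move=> /andP [nr u] /andP [pr aps] h.
rewrite big_cons Gauss_dvd ?prime_coprime ?notdvd_prod //.
rewrite h ?mem_head //= IH // => s hs; apply: h; by rewrite inE hs orbT.
Qed.

Theorem mainTheorem7 (ps : seq nat) :
  (1 <= size ps)%N -> all prime ps -> uniq ps ->
  omega_very_cost_effective (\prod_(p <- ps) p).
Proof.
move=> hs ap u.
have nil : forall (z : 'I_(\prod_(p <- ps) p)) k,
    \prod_(p <- ps) p %| z ^ k -> (z : nat) = 0.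
  move=> z k hz.
  have : \prod_(p <- ps) p %| z.
    apply: prod_dvd => // r rin.
    have pr : prime r by move/allP: ap; apply.
    have : r %| z ^ k by apply: dvdn_trans hz; rewrite (big_rem r rin) dvdn_mulr.
    by rewrite Euclid_dvdX // => /andP [].
  by rewrite /dvdn modn_small // => /eqP.
move: nil; case: ps hs ap u => [|p ps] //= _ /andP [pp aps] /andP [nps u].
rewrite big_cons => nil.
by apply: (@main_abs _ p (\prod_(j <- ps) j)) => //; apply: notdvd_prod.
Qed.
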